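(* Let $G$ be a connected graph and let $H$ be a connected component of the complement $\overline{G}$ such that $H$ is isomorphic to the star $K_{1,n}$ for some $n\geq 2$. Then no vertex of $H$ is a basis forced vertex of $G$.
   Context: All graphs are finite and simple. $\overline{G}$ denotes the complement graph. For vertices $u,v$ of a connected graph $G$, $d(u,v)$ is the length of a shortest $u$–$v$ path. A set $R\subseteq V(G)$ is a resolving set if for all distinct $x,y\in V(G)$ there is $r\in R$ with $d(r,x)\neq d(r,y)$. The metric dimension $\dim(G)$ is the minimum cardinality of a resolving set, and a resolving set of cardinality $\dim(G)$ is a metric basis. A vertex is a basis forced vertex if it belongs to every metric basis of $G$. *)

(* Defs.v *)
From mathcomp Require Import all_boot.
Set Implicit Arguments. Unset Strict Implicit. Unset Printing Implicit Defensive.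

Section Graphs.
Variable T : finType.

Definition simple_graph (e : rel T) := symmetric e /\ irreflexive e.

Definition connected_graph (e : rel T) := forall u v : T, connect e u v.

Definition compl_rel (e : rel T) : rel T := fun x y => (x != y) && ~~ e x y.

Definition walkb (e : rel T) (u v : T) (k : nat) : bool :=
  [exists p : k.-tuple T, path e u p && (last u p == v)].

(* distance: least k such that a u-v walk of length k exists
   (for connected graphs this is < #|T|, so the search over iota 0 #|T| is exhaustive) *)
Definition dist (e : rel T) (u v : T) : nat := find (walkb e u v) (iota 0 #|T|).

Definition resolving (e : rel T) (R : {set T}) : Prop :=
  forall x y : T, x != y -> exists2 r, r \in R & dist e r x != dist e r y.

Definition metric_basis (e : rel T) (B : {set T}) : Prop :=
  resolving e B /\ forall R : {set T}, resolving e R -> #|B| <= #|R|.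

Definition basis_forced (e : rel T) (v : T) : Prop :=
  forall B : {set T}, metric_basis e B -> v \in B.

Definition component (f : rel T) (C : {set T}) : Prop :=
  exists2 x, x \in C & C = [set y | connect f x y].

End Graphs.

Definition star_rel (n : nat) : rel 'I_n.+1 :=
  fun i j => (i != j) && ((i == ord0) || (j == ord0)).

Definition induced_iso_star (T : finType) (f : rel T) (C : {set T}) (n : nat) : Prop :=
  exists g : 'I_n.+1 -> T,
    [/\ injective g, g @: setT = C & forall i j, f (g i) (g j) = star_rel i j].

(* Main.v *)
From Stdlib Require Import Classical.
Set Implicit Arguments. Unset Strict Implicit.
Require Import Defs.
From mathcomp Require Import all_boot.


Lemma walkb0 (T : finType) (e : rel T) x y : walkb e x y 0 = (x == y).
Proof.
apply/existsP/idP => [[p /andP[_]]|/eqP->].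
  by rewrite (tuple0 p).
by exists [tuple]; rewrite /= eqxx.
Qed.

Lemma walkb1 (T : finType) (e : rel T) x y : walkb e x y 1 = e x y.
Proof.
apply/existsP/idP => [[p]|h].
  case: p => [[|z [|]] //= _] /andP[/andP[h _] /eqP <-]; exact h.
by exists [tuple y]; rewrite /= h eqxx.
Qed.

Lemma cardT2 (T : finType) : 1 < #|T| -> exists k, #|T| = k.+2.
Proof. by case: #|T| => [|[|k]] // _; exists k. Qed.

Lemma dist_refl (T : finType) (e : rel T) x : dist e x x = 0.
Proof.
rewrite /dist; have : 0 < #|T| by apply/card_gt0P; exists x.
by case: #|T| => [|k] //= _; rewrite walkb0 eqxx.
Qed.

Lemma dist_neq0 (T : finType) (e : rel T) x y : x != y -> dist e x y != 0.
Proof.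
move=> hxy; rewrite /dist; have : 0 < #|T| by apply/card_gt0P; exists x.
by case: #|T| => [|k] //= _; rewrite walkb0 (negbTE hxy).
Qed.

Lemma dist_adj (T : finType) (e : rel T) x y : 1 < #|T| -> x != y -> e x y -> dist e x y = 1.
Proof.
move=> /cardT2 [k hk] hxy he; rewrite /dist hk /= walkb0 walkb1 (negbTE hxy) he //.
Qed.

Lemma dist_ge2 (T : finType) (e : rel T) x y : 1 < #|T| -> x != y -> ~~ e x y -> 1 < dist e x y.
Proof.
move=> /cardT2 [k hk] hxy he; rewrite /dist hk /= walkb0 walkb1 (negbTE hxy) (negbTE he) //.
Qed.

Lemma walkb_aut (T : finType) (e : rel T) (s : T -> T) :
  (forall x y, e (s x) (s y) = e x y) -> forall a b k, walkb e a b k -> walkb e (s a) (s b) k.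
Proof.
move=> hs a b k /existsP [p /andP [hp hl]]; apply/existsP; exists (map_tuple s p).
rewrite /= path_map last_map (eqP hl) eqxx andbT.
by rewrite (eq_path (e' := e)) // => u w; rewrite /= hs.
Qed.

Lemma dist_aut (T : finType) (e : rel T) (s : T -> T) :
  (forall x, s (s x) = x) -> (forall x y, e (s x) (s y) = e x y) ->
  forall a b, dist e (s a) (s b) = dist e a b.
Proof.
move=> inv hs a b; rewrite /dist; apply: eq_find => k.
apply/idP/idP => h; last exact: walkb_aut.
by rewrite -(inv a) -(inv b); apply: walkb_aut.
Qed.

Lemma resolving_aut (T : finType) (e : rel T) (s : T -> T) B :
  (forall x, s (s x) = x) -> (forall x y, e (s x) (s y) = e x y) ->
  resolving e B -> resolving e (s @: B).
Proof.
move=> inv hs hB x y hxy.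
have hsxy : s x != s y by apply: contra hxy => /eqP h; rewrite -(inv x) h inv.
have [r rB hr] := hB _ _ hsxy.
exists (s r); first exact: imset_f.
by rewrite -[in dist e (s r) x](inv x) -[in dist e (s r) y](inv y) !dist_aut.
Qed.

Lemma basis_exists (T : finType) (e : rel T) : exists B, metric_basis e B.
Proof.
have hT : resolving e setT.
  move=> x y hxy; exists x; first by rewrite inE.
  by rewrite dist_refl eq_sym dist_neq0.
suff : forall k (R : {set T}), #|R| <= k -> resolving e R -> exists B, metric_basis e B.
  by move/(_ _ setT (leqnn _) hT).
elim=> [|k IH] R hR hres.
  exists R; split=> // R' _; exact: (leq_trans hR).
case: (classic (forall R', resolving e R' -> #|R| <= #|R'|)) => h.
  by exists R.
have [R' hR'] := not_all_ex_not _ _ h; have [h1 h2] := imply_to_and _ _ hR'.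
apply: (IH R') => //; rewrite -ltnS; apply: leq_trans hR.
by rewrite ltnNge; apply/negP.
Qed.

Definition sw (T : eqType) (a b x : T) := if x == a then b else if x == b then a else x.
Arguments sw {T}.

Lemma sw_inv (T : eqType) (a b : T) x : sw a b (sw a b x) = x.
Proof.
rewrite /sw; case: (eqVneq x a) => [->|xa].
  by rewrite eqxx; case: (eqVneq b a).
case: (eqVneq x b) => [->|xb]; first by rewrite eqxx.
by rewrite (negbTE xa) (negbTE xb).
Qed.

Lemma sw_pres (T : eqType) (e : rel T) a b : symmetric e -> irreflexive e ->
  (forall z, z != a -> z != b -> e a z = e b z) ->
  forall x y, e (sw a b x) (sw a b y) = e x y.
Proof.
move=> es ei h x y; rewrite /sw.
case: (x =P a) => xa; case: (x =P b) => xb; case: (y =P a) => ya; case: (y =P b) => yb;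
  subst => //; rewrite ?ei //.
all: try (by rewrite es).
all: try (by rewrite h //; apply/eqP).
all: try (by rewrite es h //; apply/eqP).
all: try (by rewrite es -h //; apply/eqP).
all: try (by rewrite -h //; apply/eqP).
all: try (by rewrite [e _ a]es -h //; apply/eqP).
all: try (by rewrite [e _ b]es h //; apply/eqP).
Qed.

Theorem lemma6 (T : finType) (e : rel T) (C : {set T}) (n : nat) :
  simple_graph e -> connected_graph e ->
  component (compl_rel e) C -> 2 <= n -> induced_iso_star (compl_rel e) C n ->
  forall v, v \in C -> ~ basis_forced e v.
Proof.
move=> [es ei] _ [x0 x0C Cdef] n2 [g [ginj gim gst]] v vC.
pose c := g ord0.
have CP : forall z, z \in C -> exists i, z = g i.
  by move=> z; rewrite -gim => /imsetP [i _ ->]; exists i.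
have gC : forall i, g i \in C by move=> i; rewrite -gim imset_f // inE.
have F1 : forall z w, z \in C -> w \notin C -> e z w.
  move=> z w zC wC; have zw : z != w by apply: contraNneq wC => <-.
  apply/negPn/negP => hn; move/negP: wC; apply.
  rewrite Cdef inE in zC; rewrite Cdef inE; apply: (connect_trans zC); apply: connect1.
  by rewrite /compl_rel zw hn.
pose leaf z := (z \in C) && (z != c).
have leafP : forall z, leaf z -> exists2 i, z = g i & i != ord0.
  move=> z /andP [/CP [i ->] hi]; exists i => //.
  by apply: contra hi => /eqP ->.
have LL : forall a b, leaf a -> leaf b -> a != b -> e a b.
  move=> a b /leafP [i -> i0] /leafP [j -> j0] ab.
  have := gst i j; rewrite /compl_rel /star_rel ab /= (negbTE i0) (negbTE j0).
  rewrite andbF => /negbT; rewrite negbK; exact.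
have CL : forall a, leaf a -> ~~ e c a.
  move=> a /leafP [i -> i0].
  have := gst ord0 i; rewrite /compl_rel /star_rel eqxx /= [ord0 == i]eq_sym i0.
  by move/andP => [].
have i1 : (inord 1 : 'I_n.+1) != ord0.
  by apply/eqP => /(congr1 val); rewrite /= inordK //; apply: ltnW.
pose l1 := g (inord 1).
have l1leaf : leaf l1.
  rewrite /leaf gC /=; apply: contra i1 => /eqP /ginj ->; by [].
have hT : 1 < #|T|.
  have := max_card [set c; l1]; rewrite cards2.
  by case/andP: l1leaf => _; rewrite eq_sym => ->.
have D0 := @dist_refl _ e.
have Dn := @dist_neq0 _ e.
have D1 : forall z w, z \in C -> w \notin C -> dist e z w = 1 /\ dist e w z = 1.
  move=> z w zC wC; have zw : z != w by apply: contraNneq wC => <-.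
  split; apply: dist_adj => //; [exact: F1 | by rewrite eq_sym | by rewrite es; exact: F1].
have D2 : forall a, leaf a -> 1 < dist e c a /\ 1 < dist e a c.
  move=> a la; have ca : c != a by case/andP: la => _; rewrite eq_sym.
  split; apply: dist_ge2 => //; [exact: CL | by rewrite eq_sym | by rewrite es; exact: CL].
have twh : forall a b, leaf a -> leaf b -> forall z, z != a -> z != b -> e a z = e b z.
  move=> a b la lb z za zb.
  case: (boolP (z \in C)) => zC; last by rewrite !F1 //; case/andP: la; case/andP: lb.
  case: (eqVneq z c) => [->|zc].
    by rewrite ![e _ c]es (negbTE (CL _ la)) (negbTE (CL _ lb)).
  have lz : leaf z by rewrite /leaf zC zc.
  by rewrite !LL // eq_sym.
have twin : forall (B : {set T}) a b, resolving e B -> leaf a -> leaf b -> a != b ->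
    a \notin B -> b \notin B -> False.
  move=> B a b hB la lb ab aB bB.
  have [r rB hr] := hB a b ab.
  have ra : r != a by apply: contraNneq aB => <-.
  have rb : r != b by apply: contraNneq bB => <-.
  move: hr; rewrite -(dist_aut (sw_inv a b) (sw_pres es ei (twh a b la lb))).
  by rewrite /sw eqxx (negbTE ra) (negbTE rb) eqxx.
have R1 : forall B S : {set T}, resolving e B -> (forall r, r \in B -> r != c -> r \in S) ->
    (forall z, leaf z -> z \in S) -> resolving e S.
  move=> B S hB hBS hL x y xy.
  case: (boolP (x \in S)) => xS; first by exists x => //; rewrite D0 eq_sym Dn.
  case: (boolP (y \in S)) => yS; first by exists y => //; rewrite D0 Dn // eq_sym.
  have [r rB hr] := hB x y xy.
  case: (eqVneq r c) => [rc|rc]; last by exists r => //; apply: hBS.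
  rewrite rc in hr.
  have xnl : ~~ leaf x by apply: contra xS; exact: hL.
  have ynl : ~~ leaf y by apply: contra yS; exact: hL.
  case: (eqVneq x c) => [xc|xc].
    have yc : y != c by rewrite -xc eq_sym.
    rewrite /leaf yc andbT in ynl.
    exists l1; first exact: hL.
    have [h1 _] := D1 _ _ (gC (inord 1)) ynl; rewrite h1 xc.
    by have [_ h2] := D2 _ l1leaf; rewrite neq_ltn h2 orbT.
  case: (eqVneq y c) => [yc|yc].
    rewrite /leaf xc andbT in xnl.
    exists l1; first exact: hL.
    have [h1 _] := D1 _ _ (gC (inord 1)) xnl; rewrite h1 yc.
    by have [_ h2] := D2 _ l1leaf; rewrite neq_ltn h2.
  rewrite /leaf xc andbT in xnl; rewrite /leaf yc andbT in ynl.
  have [h1 _] := D1 _ _ (gC ord0) xnl; have [h2 _] := D1 _ _ (gC ord0) ynl.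
  by move: hr; rewrite /c h1 h2 eqxx.
have R2 : forall B S : {set T}, resolving e B -> leaf v -> (forall r, r \in B -> r != v -> r \in S) ->
    c \in S -> (forall z, leaf z -> z != v -> z \in S) -> resolving e S.
  move=> B S hB lv hBS cS hL x y xy.
  case: (boolP (x \in S)) => xS; first by exists x => //; rewrite D0 eq_sym Dn.
  case: (boolP (y \in S)) => yS; first by exists y => //; rewrite D0 Dn // eq_sym.
  have [r rB hr] := hB x y xy.
  case: (eqVneq r v) => [rv|rv]; last by exists r => //; apply: hBS.
  rewrite rv in hr.
  have xc : x != c by apply: contraNneq xS => ->.
  have yc : y != c by apply: contraNneq yS => ->.
  have vC' : v \in C by case/andP: lv.
  case: (eqVneq x v) => [xv|xv].
    have yv : y != v by rewrite -xv eq_sym.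
    have ynC : y \notin C.
      apply: contra yS => yC; apply: hL => //; by rewrite /leaf yC yc.
    exists c => //.
    have [h1 _] := D1 _ _ (gC ord0) ynC; rewrite h1 xv.
    by have [h2 _] := D2 _ lv; rewrite neq_ltn h2 orbT.
  case: (eqVneq y v) => [yv|yv].
    have xnC : x \notin C.
      apply: contra xS => xC; apply: hL => //; by rewrite /leaf xC xc.
    exists c => //.
    have [h1 _] := D1 _ _ (gC ord0) xnC; rewrite h1 yv.
    by have [h2 _] := D2 _ lv; rewrite neq_ltn h2.
  have xnC : x \notin C.
    apply: contra xS => xC; apply: hL => //; by rewrite /leaf xC xc.
  have ynC : y \notin C.
    apply: contra yS => yC; apply: hL => //; by rewrite /leaf yC yc.
  have [h1 _] := D1 _ _ vC' xnC; have [h2 _] := D1 _ _ vC' ynC.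
  by move: hr; rewrite h1 h2 eqxx.
have [B [hB hmin]] := basis_exists e.
have mkb : forall S : {set T}, resolving e S -> #|S| <= #|B| -> metric_basis e S.
  by move=> S hS hc; split => // R hR; apply: leq_trans hc (hmin R hR).
have noc : c \in B -> (forall z, leaf z -> z \in B) -> False.
  move=> cB hL.
  have hS : resolving e (B :\ c).
    apply: (R1 B) => //; first by move=> r rB rc; rewrite !inE rc.
    by move=> z lz; rewrite !inE hL // andbT; case/andP: lz.
  have := hmin _ hS; rewrite (cardsD1 c B) cB.
  by rewrite add1n ltnn.
suff [B' hB' vB'] : exists2 B', metric_basis e B' & v \notin B'.
  by move=> hf; move: (hf _ hB'); rewrite (negbTE vB').
case: (boolP (v \in B)) => vB; last by exists B.
case: (eqVneq v c) => [vc|vc].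
  rewrite vc in vB *.
  case: (boolP [exists z, leaf z && (z \notin B)]) => [/existsP [l0 /andP [ll0 l0B]]|].
    pose S := l0 |: (B :\ c).
    have l0c : l0 != c by case/andP: ll0.
    exists S; last by rewrite !inE eqxx /= orbF eq_sym.
    apply: mkb.
      apply: (R1 B) => //; first by move=> r rB rc; rewrite !inE rc rB orbT.
      move=> z lz; rewrite !inE; case: (eqVneq z l0) => //= zl0.
      have zc : z != c by case/andP: lz.
      rewrite zc /=; apply/negPn/negP => zB; exact: (twin B z l0 hB lz ll0 zl0 zB l0B).
    by rewrite cardsU1 !inE (negbTE l0B) andbF /= (cardsD1 c B) vB.
  move/existsPn => h; exfalso; apply: (noc vB) => z lz.
  by have := h z; rewrite lz /= negbK.
have lv : leaf v by rewrite /leaf vC vc.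
case: (boolP [exists z, leaf z && (z \notin B)]) => [/existsP [l0 /andP [ll0 l0B]]|].
  have vl0 : v != l0 by apply: contraNneq l0B => <-.
  exists (sw v l0 @: B).
    apply: mkb; first exact: (resolving_aut (sw_inv v l0) (sw_pres es ei (twh v l0 lv ll0))).
    by rewrite card_imset //; apply: (can_inj (sw_inv v l0)).
  apply/imsetP => [[z zB hz]].
  have := congr1 (sw v l0) hz; rewrite sw_inv.
  by rewrite /sw eqxx => zl; move: l0B; rewrite zl zB.
move/existsPn => h.
have hL : forall z, leaf z -> z \in B by move=> z lz; have := h z; rewrite lz /= negbK.
case: (boolP (c \in B)) => cB; first by exfalso; exact: noc.
exists (c |: (B :\ v)); last by rewrite !inE eqxx /= orbF.
apply: mkb.
  apply: (R2 B) => //.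
  - by move=> r rB rv; rewrite !inE rB rv orbT.
  - by rewrite !inE eqxx.
  - by move=> z lz zv; rewrite !inE zv hL // orbT.
rewrite cardsU1 !inE (negbTE cB) andbF /= (cardsD1 v B) vB.
by [].
Qed.
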